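(* Let $G$ be a finite group and let $\chi$ be the character of an irreducible complex representation of $G$ that is realizable over $\mathbb{R}$. Write $\chi\otimes\chi=a_1\chi_1+\cdots+a_q\chi_q$ with positive integers $a_i$ and irreducible characters $\chi_i$ of dimensions $n_i=\chi_i(1)$. Then for every $g\in G$, $$c(g)\le\frac{(a_1/n_1^2)\chi_1(g)+\cdots+(a_q/n_q^2)\chi_q(g)}{a_1n_1+\cdots+a_qn_q},\qquad c(G)\le\frac{a_1/n_1+\cdots+a_q/n_q}{a_1n_1+\cdots+a_qn_q}.$$
   Context: For $g\in G$, $c(g)=|\{(x,y)\in G\times G:[x,y]=g\}|/|G|^2$, and $c(G)=c(1)$. *)

(* Defs.v *)
From HB Require Import structures.
From mathcomp Require Import all_boot all_order all_algebra all_fingroup all_solvable all_field all_character.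
Set Implicit Arguments. Unset Strict Implicit. Unset Printing Implicit Defensive.
Import Order.TTheory GRing.Theory Num.Theory.
Local Open Scope ring_scope.

Definition comm_prob (gT : finGroupType) (G : {group gT}) (g : gT) : algC :=
  (#|[set xy : gT * gT | [&& xy.1 \in G, xy.2 \in G & ([~ xy.1, xy.2])%g == g]]|%:R)
  / (#|G|%:R ^+ 2).

Definition real_realizable (gT : finGroupType) (G : {group gT}) (chi : 'CF(G)) :=
  exists n (rG : mx_representation algC G n),
    (forall x, x \in G -> rG x \is a mxOver Num.real) /\ cfRepr rG = chi.

(* Main.v *)
Require Import Defs.
From HB Require Import structures.
From mathcomp Require Import all_boot all_order all_algebra all_fingroup all_solvable all_field all_character.
From mathcomp Require Import ring.
Import Order.TTheory GRing.Theory Num.Theory.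
Local Open Scope ring_scope.

Lemma repr_sum_conj (gT : finGroupType) (G : {group gT}) n
  (rG : mx_representation algC G n) a b :
  mx_absolutely_irreducible rG -> a \in G -> b \in G ->
  (\sum_(y in G) \tr (rG (a * b ^ y)%g)) * n%:R
   = #|G|%:R * \tr (rG a) * \tr (rG b).
Proof.
move=> absG Ga Gb.
pose M := \sum_(y in G) rG (b ^ y)%g.
have cM : centgmx rG M.
  apply/centgmxP => z Gz; rewrite mulmx_suml mulmx_sumr.
  rewrite [RHS](reindex_inj (mulIg z)) /=.
  apply: eq_big => [y|y Gy]; first by rewrite groupMr.
  rewrite -!repr_mxM ?groupJ ?groupM //.
  have -> : (z * b ^ (y * z) = b ^ y * z)%g.
    by rewrite !conjgE invMg !mulgA mulgV mul1g.
  by [].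
have [e De] := is_scalar_mxP (mx_abs_irr_cent_scalar absG cM).
have trM : \tr M = #|G|%:R * \tr (rG b).
  rewrite /M raddf_sum /= mulr_natl -sumr_const.
  apply: eq_bigr => y Gy; rewrite conjgE !repr_mxM ?groupM ?groupV //.
  by rewrite mxtrace_mulC -mulmxA -repr_mxM ?groupV // mulgV repr_mx1 mulmx1.
have eE : e *+ n = #|G|%:R * \tr (rG b) by rewrite -trM De mxtrace_scalar.
transitivity (\tr (rG a *m M) * n%:R).
  congr (_ * _); rewrite mulmx_sumr raddf_sum; apply: eq_bigr => y Gy /=.
  by rewrite repr_mxM ?groupJ.
rewrite De mul_mx_scalar mxtraceZ mulrAC mulr_natr eE.
by rewrite mulrAC.
Qed.

Lemma chiC (gT : finGroupType) (G : {group gT}) (phi : 'CF(G)) u v :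
  v \in G -> phi (u * v)%g = phi (v * u)%g.
Proof.
move=> Gv; rewrite -(cfunJ phi (v * u) Gv).
by rewrite conjgE !mulgA mulVg mul1g.
Qed.

Lemma sum_conjE (gT : finGroupType) (G : {group gT}) (i : Iirr G) a b :
  a \in G -> b \in G ->
  (\sum_(y in G) 'chi_i (a * b ^ y)%g) * 'chi_i 1%g
   = #|G|%:R * 'chi_i a * 'chi_i b.
Proof.
move=> Ga Gb.
have H := @repr_sum_conj _ _ _ _ _ _ (groupC (socle_irr (socle_of_Iirr i))) Ga Gb.
rewrite -irrRepr cfRepr1 !cfunE Ga Gb !mulr1n -H; congr (_ * _).
by apply: eq_bigr => y Gy; rewrite cfunE groupM ?groupJ // mulr1n.
Qed.

Lemma comm_sum (gT : finGroupType) (G : {group gT}) (i : Iirr G) g :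
  g \in G ->
  (\sum_(x in G) \sum_(y in G) 'chi_i ([~ x, y] * g)%g) * 'chi_i 1%g ^+ 2
   = #|G|%:R ^+ 2 * 'chi_i g.
Proof.
move=> Gg.
have n0 : 'chi_i 1%g != 0 by rewrite irr1_neq0.
have G0 : #|G|%:R != 0 :> algC by rewrite neq0CG.
transitivity (#|G|%:R * 'chi_i 1%g * \sum_(x in G) 'chi_i (g * x^-1)%g * 'chi_i x).
  rewrite expr2 mulrA mulr_suml mulr_suml mulr_sumr; apply: eq_bigr => x Gx.
  have -> : \sum_(y in G) 'chi_i ([~ x, y] * g)%g
          = \sum_(y in G) 'chi_i ((g * x^-1) * x ^ y)%g.
    apply: eq_bigr => y Gy; by rewrite commgEl [LHS]chiC // mulgA.
  rewrite sum_conjE ?groupM ?groupV //.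
  ring.
have := generalized_orthogonality_relation g i i.
rewrite eqxx mul1r => HO.
have -> : \sum_(x in G) 'chi_i (g * x^-1)%g * 'chi_i x
        = \sum_(x in G) 'chi_i (x * g)%g * 'chi_i x^-1%g.
  rewrite [RHS](reindex_inj invg_inj) /=.
  apply: eq_big => [x|x Gx]; first by rewrite groupV.
  by rewrite invgK [in LHS]chiC ?groupV.
have -> : \sum_(x in G) 'chi_i (x * g)%g * 'chi_i x^-1%g
        = #|G|%:R * ('chi_i g / 'chi_i 1%g).
  by rewrite -HO mulrA mulfV // mul1r.
rewrite expr2; field; exact: n0.
Qed.

Lemma count_eq (gT : finGroupType) (G : {group gT}) (g : gT) :
  (#|[set xy : gT * gT | [&& xy.1 \in G, xy.2 \in G & ([~ xy.1, xy.2])%g == g]]|%:R : algC)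
  = \sum_(x in G) \sum_(y in G) (if ([~ x, y] == g)%g then 1 else 0).
Proof.
rewrite pair_big /= -big_mkcondr /= -sum1_card natr_sum.
by apply: eq_bigl => p; rewrite inE andbA.
Qed.

Theorem corollary6 (gT : finGroupType) (G : {group gT}) (i : Iirr G) :
  real_realizable 'chi[G]_i ->
  (forall g, g \in G ->
     comm_prob G g <=
       (\sum_(j in irr_constt ('chi_i * 'chi_i))
           '['chi_i * 'chi_i, 'chi_j] / ('chi_j 1%g) ^+ 2 * 'chi_j g)
       / (\sum_(j in irr_constt ('chi_i * 'chi_i))
           '['chi_i * 'chi_i, 'chi_j] * 'chi_j 1%g))
  /\
  comm_prob G 1%g <=
       (\sum_(j in irr_constt ('chi_i * 'chi_i))
           '['chi_i * 'chi_i, 'chi_j] / 'chi_j 1%g)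
       / (\sum_(j in irr_constt ('chi_i * 'chi_i))
           '['chi_i * 'chi_i, 'chi_j] * 'chi_j 1%g).
Proof.
case=> m [rG [Hreal Hchi]].
set chi := 'chi_i; set phi := chi * chi.
have Rchi x : x \in G -> chi x \is Num.real.
  move=> Gx; rewrite /chi -Hchi cfunE Gx mulr1n.
  by apply: rpred_sum => k _; move/mxOverP: (Hreal x Gx); apply.
have Pphi h : h \in G -> 0 <= phi h.
  by move=> Gh; rewrite cfunE -expr2 real_exprn_even_ge0 ?Rchi.
have phiE h : phi h = \sum_j '[phi, 'chi_j] * 'chi_j h.
  by rewrite {1}(cfun_sum_cfdot phi) sum_cfunE; apply: eq_bigr => j _; rewrite cfunE.
have rm (F : Iirr G -> algC) : (forall j, '[phi, 'chi_j] = 0 -> F j = 0) ->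
    \sum_(j in irr_constt phi) F j = \sum_j F j.
  move=> HF; apply: big_rmcond => j; rewrite inE negbK => /eqP; exact: HF.
have D : \sum_(j in irr_constt phi) '[phi, 'chi_j] * 'chi_j 1%g = chi 1%g ^+ 2.
  rewrite rm; last by move=> j ->; rewrite mul0r.
  by rewrite -phiE cfunE expr2.
have n0 : chi 1%g != 0 by rewrite irr1_neq0.
have n2 : 0 < chi 1%g ^+ 2 by rewrite exprn_gt0 ?irr1_gt0.
have main g : g \in G ->
    comm_prob G g <=
       (\sum_(j in irr_constt phi)
           '[phi, 'chi_j] / ('chi_j 1%g) ^+ 2 * 'chi_j g)
       / (\sum_(j in irr_constt phi) '[phi, 'chi_j] * 'chi_j 1%g).
  move=> Gg; rewrite D /comm_prob count_eq.
  rewrite rm; last by move=> j ->; rewrite !mul0r.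
  rewrite ler_pdivlMr // mulrAC ler_pdivrMr ?exprn_gt0 ?gt0CG //.
  have -> : (\sum_j '[phi, 'chi_j] / 'chi_j 1%g ^+ 2 * 'chi_j g) * #|G|%:R ^+ 2
      = \sum_(x in G) \sum_(y in G) phi ([~ x, y] * g)%g.
    symmetry.
    transitivity (\sum_(x in G) \sum_(y in G) \sum_j '[phi, 'chi_j] * 'chi_j ([~ x, y] * g)%g).
      by apply: eq_bigr => x _; apply: eq_bigr => y _; rewrite phiE.
    transitivity (\sum_j '[phi, 'chi_j] * \sum_(x in G) \sum_(y in G) 'chi_j ([~ x, y] * g)%g).
      rewrite (eq_bigr (fun x => \sum_j \sum_(y in G) '[phi, 'chi_j] * 'chi_j ([~ x, y] * g)%g)).
        rewrite exchange_big /=; apply: eq_bigr => j _.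
        by rewrite big_distrr /=; apply: eq_bigr => x _; rewrite big_distrr.
      by move=> x _; rewrite exchange_big.
    rewrite mulr_suml; apply: eq_bigr => j _.
    have Hj := @comm_sum _ G j g Gg.
    have nj : 'chi_j 1%g ^+ 2 != 0 by rewrite expf_neq0 ?irr1_neq0.
    rewrite (canRL (mulfK nj) Hj).
    field; exact: irr1_neq0.
  rewrite mulr_suml [X in _ <= X]exchange_big /=.
  apply: ler_sum => y Gy; rewrite mulr_suml; apply: ler_sum => x Gx.
  case: eqP => [Exy|_]; last by rewrite mul0r Pphi // groupM ?groupR.
  have -> : ([~ x, y] * g = 1)%g by rewrite -invgR Exy mulVg.
  by rewrite mul1r cfunE expr2.
split; first exact: main.
have := main 1%g (group1 G).
congr (_ <= _ / _); apply: eq_bigr => j _.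
by rewrite expr2 invfM mulrA mulfVK ?irr1_neq0.
Qed.
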